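(* Suppose $(\gamma^\sharp,\lambda^\sharp)$ is an eligible pair. Let $\lambda_{\rm Lasso}>\lambda^\sharp$ with $\lambda_{\rm Lasso}\|\gamma^\sharp\|_1\to0$, and let $$\gamma_{\rm Lasso}:=\arg\min_{c\in\mathbb{R}^{p-1}}\big\{\mathbb{E}(\mathbf{x}_1-\mathbf{x}_{-1}c)^2+2\lambda_{\rm Lasso}\|c\|_1\big\}$$ be the noiseless Lasso. Then $\|\Sigma_{-1,-1}^{1/2}(\gamma_{\rm Lasso}-\gamma^\sharp)\|_2^2\to0$. In addition, if $\lambda_{\rm Lasso}\ge2\lambda^\sharp$, then $(\gamma_{\rm Lasso},\lambda_{\rm Lasso})$ is an eligible pair.
   Context: Asymptotic framework: all quantities may depend on $n$; limits as $n\to\infty$. $\mathbf{x}=(\mathbf{x}_1,\dots,\mathbf{x}_p)$ is a zero-mean Gaussian row vector with nonsingular covariance $\Sigma$ (diagonal entries $1$, smallest eigenvalue bounded away from zero); $\mathbf{x}_{-1}=(\mathbf{x}_2,\dots,\mathbf{x}_p)$, $\Sigma_{-1,-1}=\mathbb{E}\mathbf{x}_{-1}^T\mathbf{x}_{-1}$, $\gamma^0:=\Sigma_{-1,-1}^{-1}\mathbb{E}\mathbf{x}_{-1}^T\mathbf{x}_1$. A pair $(\gamma,\lambda)$ with $\gamma\in\mathbb{R}^{p-1}$, $\lambda>0$ is eligible if $\|\Sigma_{-1,-1}(\gamma-\gamma^0)\|_\infty\le\lambda$ and $\lambda\|\gamma\|_1\to0$. *)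

(* Defs.v *)
From HB Require Import structures.
From mathcomp Require Import all_boot all_order all_algebra.
From mathcomp Require Import all_classical all_reals all_analysis.
Set Implicit Arguments.
Unset Strict Implicit.
Unset Printing Implicit Defensive.
Import Order.TTheory GRing.Theory Num.Theory.
Import numFieldNormedType.Exports.
Local Open Scope classical_set_scope.
Local Open Scope ring_scope.

(* Coordinates: x = (x_1, x_{-1}) with x_{-1} of dimension q = p - 1, so the
   covariance Sigma is a (1 + q) x (1 + q) matrix; vectors gamma are columns. *)

Section Defs.
Variable R : realType.

Definition l1norm q (v : 'cV[R]_q) : R := \sum_(i < q) `|v i 0|.
Definition supnorm q (v : 'cV[R]_q) : R := \big[Num.max/0]_(i < q) `|v i 0|.

(* quadratic form v^T A v ; for A = Sigma_{-1,-1}, this is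
   ||Sigma_{-1,-1}^{1/2} v||_2^2 *)
Definition qform q (A : 'M[R]_q) (v : 'cV[R]_q) : R := (v^T *m A *m v) 0 0.

Definition Sigma_mm q (S : 'M[R]_(1 + q)) : 'M[R]_q := drsubmx S.
Definition Sigma_m1 q (S : 'M[R]_(1 + q)) : 'cV[R]_q := dlsubmx S.
Definition Sigma_1m q (S : 'M[R]_(1 + q)) : 'rV[R]_q := ursubmx S.
Definition Sigma_11 q (S : 'M[R]_(1 + q)) : R := ulsubmx S 0 0.

Definition gamma0 q (S : 'M[R]_(1 + q)) : 'cV[R]_q :=
  invmx (Sigma_mm S) *m Sigma_m1 S.

(* E (x_1 - x_{-1} c)^2 + 2 lam ||c||_1, the expectation written out in
   terms of the covariance of the zero-mean vector x *)
Definition lasso_obj q (S : 'M[R]_(1 + q)) (lam : R) (c : 'cV[R]_q) : R :=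
  Sigma_11 S - 2 * (Sigma_1m S *m c) 0 0 + qform (Sigma_mm S) c
  + 2 * lam * l1norm c.

(* Standing assumptions on the sequence of covariance matrices:
   symmetric, unit diagonal, smallest eigenvalue bounded below by a
   constant c > 0 uniformly in n (Rayleigh-quotient form). *)
Definition cov_model (q : nat -> nat) (S : forall n, 'M[R]_(1 + q n)) : Prop :=
  (forall n, (S n)^T = S n) /\
  (forall n (i : 'I_(1 + q n)), S n i i = 1) /\
  (exists c : R, 0 < c /\
     forall n (v : 'cV[R]_(1 + q n)), c * (v^T *m v) 0 0 <= qform (S n) v).

Definition eligible (q : nat -> nat) (S : forall n, 'M[R]_(1 + q n))
  (g : forall n, 'cV[R]_(q n)) (lam : nat -> R) : Prop :=
  (forall n, 0 < lam n) /\
  (forall n, supnorm (Sigma_mm (S n) *m (g n - gamma0 (S n))) <= lam n) /\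
  ((fun n => lam n * l1norm (g n)) @ \oo --> (0 : R)).

End Defs.

(* Main.v *)
Require Import Defs.
From HB Require Import structures.
From mathcomp Require Import all_boot all_order all_algebra.
From mathcomp Require Import all_classical all_reals all_analysis.
From mathcomp Require Import ring lra.
Import Order.TTheory GRing.Theory Num.Theory.
Import numFieldNormedType.Exports.
Local Open Scope classical_set_scope.
Local Open Scope ring_scope.

Section Aux.
Variable R : realType.
Variable q : nat.
Implicit Types (u v : 'cV[R]_q) (A : 'M[R]_q).

Lemma eD (m n : nat) (M N : 'M[R]_(m, n)) i j : (M + N) i j = M i j + N i j.
Proof. by rewrite mxE. Qed.
Lemma eN (m n : nat) (M : 'M[R]_(m, n)) i j : (- M) i j = - M i j.
Proof. by rewrite mxE. Qed.
Lemma eB (m n : nat) (M N : 'M[R]_(m, n)) i j : (M - N) i j = M i j - N i j.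
Proof. by rewrite eD eN. Qed.
Lemma eZ (m n : nat) (a : R) (M : 'M[R]_(m, n)) i j : (a *: M) i j = a * M i j.
Proof. by rewrite mxE. Qed.
Lemma eT (M : 'M[R]_1) : M^T 0 0 = M 0 0.
Proof. by rewrite mxE. Qed.

Lemma dot_sym u v : (u^T *m v) 0 0 = (v^T *m u) 0 0.
Proof. by rewrite -eT trmx_mul trmxK. Qed.

Definition bl A u v := (u^T *m A *m v) 0 0.

Lemma bl_sym A u v : A^T = A -> bl A u v = bl A v u.
Proof. by move=> sA; rewrite /bl -eT !trmx_mul trmxK sA mulmxA. Qed.

Lemma qformD A u v : qform A (u + v) = qform A u + qform A v + bl A u v + bl A v u.
Proof.
rewrite /qform /bl [(u + v)^T]linearD /= !mulmxDl !mulmxDr !eD; lra.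
Qed.

Lemma l1_ge0 u : 0 <= l1norm u.
Proof. by apply: sumr_ge0 => i _. Qed.

Lemma l1D u v : l1norm (u + v) <= l1norm u + l1norm v.
Proof.
rewrite /l1norm -big_split /=; apply: ler_sum => i _; rewrite eD; exact: ler_normD.
Qed.

Lemma l1B u v : l1norm (u - v) <= l1norm u + l1norm v.
Proof.
rewrite /l1norm -big_split /=; apply: ler_sum => i _; rewrite eB; exact: ler_normB.
Qed.

Lemma l1Ze (t : R) (i : 'I_q) : l1norm (t *: delta_mx i (0 : 'I_1)) = `|t|.
Proof.
rewrite /l1norm (bigD1 i) //= big1 ?addr0.
  by rewrite eZ mxE !eqxx mulr1.
by move=> j /negbTE ji; rewrite eZ mxE ji /= mulr0 normr0.
Qed.

Lemma sup_le v l : 0 <= l -> (forall i, `|v i 0| <= l) -> supnorm v <= l.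
Proof.
move=> l0 H; rewrite /supnorm; elim/big_ind: _ => //.
by move=> x y hx hy; rewrite ge_max hx hy.
Qed.

Lemma le_sup v i : `|v i 0| <= supnorm v.
Proof.
rewrite /supnorm (bigD1 i) //=; by rewrite le_max lexx.
Qed.

Lemma dot_bound u d l : (forall i, `|u i 0| <= l) ->
  `|(d^T *m u) 0 0| <= l1norm d * l.
Proof.
move=> H; rewrite mxE /l1norm mulr_suml.
apply: le_trans (ler_norm_sum _ _ _) _; apply: ler_sum => i _.
by rewrite mxE normrM; apply: ler_wpM2l => //.
Qed.


Lemma kkt_num (u l : R) : (forall t, 0 <= 2 * t * u + t * t + 2 * l * `|t|) -> `|u| <= l.
Proof.
move=> H; apply/ler_addgt0Pr => e e0.
case: (lerP 0 u) => hu.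
  rewrite ger0_norm //; have := H (-e); rewrite normrN gtr0_norm //; nra.
rewrite ltr0_norm //; have := H e; rewrite gtr0_norm //; nra.
Qed.

Lemma bl_Zl A u v (t : R) : bl A (t *: u) v = t * bl A u v.
Proof. by rewrite /bl [(t *: u)^T]linearZ /= -!scalemxAl eZ. Qed.

Lemma qformZ A u (t : R) : qform A (t *: u) = t * t * qform A u.
Proof.
rewrite /qform [(t *: u)^T]linearZ /= -!scalemxAl -scalemxAr !eZ; ring.
Qed.

Lemma qform_e A (i : 'I_q) : qform A (delta_mx i (0 : 'I_1)) = A i i.
Proof.
by rewrite /qform trmx_delta -rowE -colE !mxE.
Qed.

Lemma dot_e (M : 'cV[R]_q) (i : 'I_q) : ((delta_mx i (0 : 'I_1))^T *m M) 0 0 = M i 0.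
Proof. by rewrite trmx_delta -rowE mxE. Qed.

Lemma bl_e A u (i : 'I_q) : bl A (delta_mx i (0 : 'I_1)) u = (A *m u) i 0.
Proof. by rewrite /bl -mulmxA dot_e. Qed.

Lemma sumsq_ge0 u : 0 <= (u^T *m u) 0 0.
Proof. rewrite mxE; apply: sumr_ge0 => i _; rewrite mxE -expr2; exact: sqr_ge0. Qed.

Lemma unit_of_pd A (c : R) : 0 < c -> (forall w, c * (w^T *m w) 0 0 <= qform A w) ->
  A \in unitmx.
Proof.
move=> c0 H; rewrite unitmxE unitfE; apply/negP => /det0P [v v0 vA].
have vv : (v *m v^T) 0 0 = \sum_j v 0 j * v 0 j.
  by rewrite mxE; apply: eq_bigr => j _; rewrite !mxE.
have hs : 0 <= \sum_j v 0 j * v 0 j.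
  by apply: sumr_ge0 => j _; rewrite -expr2; exact: sqr_ge0.
have := H v^T; rewrite /qform trmxK vA mul0mx vv mxE.
move=> hle; have s0 : \sum_j v 0 j * v 0 j = 0.
  apply/eqP; rewrite eq_le hs andbT; rewrite -(pmulr_rle0 _ c0); exact: hle.
move/negP: v0; apply; apply/eqP/matrixP => i j; rewrite (ord1 i) mxE.
have := @psumr_eq0P _ _ _ (fun k => v 0 k * v 0 k) (fun k _ => (ltac:(by rewrite -expr2 sqr_ge0) : 0 <= v 0 k * v 0 k)) s0 j isT.
by move/eqP; rewrite mulf_eq0 orbb => /eqP.
Qed.

Section Obj.
Variables (A : 'M[R]_q) (b : 'cV[R]_q) (bt : 'rV[R]_q) (s lam : R).
Hypothesis sA : A^T = A.
Hypothesis btE : bt = b^T.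
Definition obj (c : 'cV[R]_q) := s - 2 * (bt *m c) 0 0 + qform A c + 2 * lam * l1norm c.

Lemma basic_ineq (g gs : 'cV[R]_q) (ls : R) : 0 <= ls -> (forall c, obj g <= obj c) ->
  (forall i, `|(A *m gs - b) i 0| <= ls) ->
  qform A (g - gs) + 2 * lam * l1norm g <= 2 * lam * l1norm gs + 2 * ls * (l1norm g + l1norm gs).
Proof.
move=> hls Hmin Hb; have := Hmin gs; rewrite /obj.
set d := g - gs; have gE : g = gs + d by rewrite /d addrC subrK.
have e1 : (bt *m g) 0 0 = (bt *m gs) 0 0 + (d^T *m b) 0 0.
  by rewrite {1}gE mulmxDr eD btE [(b^T *m d) 0 0]dot_sym.
have e2 : qform A g = qform A gs + qform A d + 2 * (d^T *m (A *m gs)) 0 0.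
  by rewrite {1}gE qformD (bl_sym _ _ _ sA) /bl mulmxA; ring.
have e3 : (d^T *m (A *m gs - b)) 0 0 = (d^T *m (A *m gs)) 0 0 - (d^T *m b) 0 0.
  by rewrite mulmxBr eB.
have hb := dot_bound _ d _ Hb; rewrite e3 in hb.
have hd := l1B g gs; rewrite -/d in hd.
have h4 : l1norm d * ls <= (l1norm g + l1norm gs) * ls by apply: ler_wpM2r.
rewrite e1 e2.
have := ler_norm (- ((d^T *m (A *m gs)) 0 0 - (d^T *m b) 0 0)); rewrite normrN.
move: hb h4; set X := (d^T *m (A *m gs)) 0 0; set Y := (d^T *m b) 0 0.
lra.
Qed.

Lemma kkt (g : 'cV[R]_q) : 0 <= lam -> (forall i, A i i = 1) ->
  (forall c, obj g <= obj c) -> forall i, `|(A *m g - b) i 0| <= lam.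
Proof.
move=> l0 Ad Hmin i; rewrite eB; apply: kkt_num => t.
have := Hmin (g + t *: delta_mx i (0 : 'I_1)); rewrite /obj.
set e := delta_mx i (0 : 'I_1).
have e1 : (bt *m (g + t *: e)) 0 0 = (bt *m g) 0 0 + t * b i 0.
  by rewrite mulmxDr eD -scalemxAr eZ btE [(b^T *m e) 0 0]dot_sym dot_e.
have e2 : qform A (g + t *: e) = qform A g + t * t * A i i + 2 * t * (A *m g) i 0.
  by rewrite qformD qformZ qform_e (bl_sym _ _ _ sA) bl_Zl bl_e; ring.
have e3 : l1norm (g + t *: e) <= l1norm g + `|t|.
  by apply: le_trans (l1D _ _) _; rewrite l1Ze.
have e4 : lam * l1norm (g + t *: e) <= lam * (l1norm g + `|t|) by apply: ler_wpM2l.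
rewrite e1 e2 Ad; move: e4; set L := l1norm (g + t *: e); lra.
Qed.
End Obj.
Lemma qform_col (p : nat) (M : 'M[R]_(1 + p)) (w : 'cV[R]_p) :
  qform M (col_mx 0 w) = qform (drsubmx M) w.
Proof.
rewrite /qform tr_col_mx -{1}[M]submxK mul_row_block mul_row_col.
by rewrite [0^T]linear0 !mul0mx ?mulmx0 ?add0r ?addr0 ?mul0mx ?add0r.
Qed.

Lemma sumsq_col (p : nat) (w : 'cV[R]_p) :
  ((col_mx (0 : 'cV[R]_1) w)^T *m col_mx 0 w) 0 0 = (w^T *m w) 0 0.
Proof. by rewrite tr_col_mx mul_row_col [0^T]linear0 mul0mx add0r. Qed.

End Aux.
Arguments unit_of_pd {R q}.
Arguments le_sup {R q}.
Arguments sup_le {R q}.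
Arguments l1_ge0 {R q}.
Arguments sumsq_ge0 {R q}.
Arguments qform_col {R p}.
Arguments sumsq_col {R p}.

Theorem lemma3p2 (R : realType) (q : nat -> nat)
  (S : forall n, 'M[R]_(1 + q n))
  (gs : forall n, 'cV[R]_(q n)) (ls : nat -> R)
  (lL : nat -> R) (gL : forall n, 'cV[R]_(q n)) :
  cov_model S ->
  eligible S gs ls ->
  (forall n, ls n < lL n) ->
  (fun n => lL n * l1norm (gs n)) @ \oo --> (0 : R) ->
  (forall n (c : 'cV[R]_(q n)),
      lasso_obj (S n) (lL n) (gL n) <= lasso_obj (S n) (lL n) c) ->
  ((fun n => qform (Sigma_mm (S n)) (gL n - gs n)) @ \oo --> (0 : R)) /\
  ((forall n, 2 * ls n <= lL n) -> eligible S gL lL).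
Proof.
move=> [sS [dS [c [c0 Hc]]]] [ls0 [lsb lsc]] lslt lLc Hmin.
have Apd : forall n (w : 'cV[R]_(q n)),
    c * (w^T *m w) 0 0 <= qform (Sigma_mm (S n)) w.
  by move=> n w; have := Hc n (col_mx 0 w); rewrite qform_col sumsq_col.
have Apsd : forall n (w : 'cV[R]_(q n)), 0 <= qform (Sigma_mm (S n)) w.
  move=> n w; apply: le_trans (Apd n w).
  by apply: mulr_ge0; [exact: ltW | exact: sumsq_ge0].
have Asym : forall n, (Sigma_mm (S n))^T = Sigma_mm (S n).
  by move=> n; rewrite /Sigma_mm trmx_drsub sS.
have btE : forall n, Sigma_1m (S n) = (Sigma_m1 (S n))^T.
  by move=> n; apply: trmx_inj; rewrite /Sigma_1m /Sigma_m1 trmx_ursub sS trmxK.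
have Aunit : forall n, Sigma_mm (S n) \in unitmx.
  by move=> n; exact: (@unit_of_pd R (q n) (Sigma_mm (S n)) c c0 (Apd n)).
have Ad : forall n i, Sigma_mm (S n) i i = 1.
  by move=> n i; rewrite /Sigma_mm !mxE dS.
have g0E : forall n v, Sigma_mm (S n) *m (v - gamma0 (S n)) =
    Sigma_mm (S n) *m v - Sigma_m1 (S n).
  by move=> n v; rewrite /gamma0 mulmxBr mulmxA mulmxV // mul1mx.
have Hb : forall n i, `|(Sigma_mm (S n) *m gs n - Sigma_m1 (S n)) i 0| <= ls n.
  by move=> n i; rewrite -g0E; apply: le_trans (le_sup _ i) (lsb n).
have BI : forall n, qform (Sigma_mm (S n)) (gL n - gs n) + 2 * lL n * l1norm (gL n)
    <= 2 * lL n * l1norm (gs n) + 2 * ls n * (l1norm (gL n) + l1norm (gs n)).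
  move=> n.
  exact: (@basic_ineq R (q n) (Sigma_mm (S n)) (Sigma_m1 (S n)) (Sigma_1m (S n))
    (Sigma_11 (S n)) (lL n) (Asym n) (btE n) (gL n) (gs n) (ls n) (ltW (ls0 n))
    (Hmin n) (Hb n)).
split.
  apply: (@squeeze_cvgr _ _ _ _ (fun=> 0) (fun n => 4 * (lL n * l1norm (gs n)))).
  - apply: nearW => n; rewrite Apsd /=.
    have h1 := BI n; have h2 := l1_ge0 (gL n); have h3 := l1_ge0 (gs n).
    have h4 : ls n * l1norm (gL n) <= lL n * l1norm (gL n).
      by apply: ler_wpM2r => //; exact: ltW.
    have h5 : ls n * l1norm (gs n) <= lL n * l1norm (gs n).
      by apply: ler_wpM2r => //; exact: ltW.
    lra.
  - exact: cvg_cst.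
  - rewrite -(mulr0 4); apply: cvgM => //; exact: cvg_cst.
move=> h2l; split; [|split].
- by move=> n; apply: lt_trans (ls0 n) (lslt n).
- move=> n; apply: sup_le => [|i].
    exact: ltW (lt_trans (ls0 n) (lslt n)).
  rewrite g0E; apply: (@kkt R (q n) (Sigma_mm (S n)) (Sigma_m1 (S n)) (Sigma_1m (S n))
    (Sigma_11 (S n)) (lL n) (Asym n) (btE n) (gL n)) => //.
    exact: ltW (lt_trans (ls0 n) (lslt n)).
  exact: Hmin.
apply: (@squeeze_cvgr _ _ _ _ (fun=> 0) (fun n => 3 * (lL n * l1norm (gs n)))).
- apply: nearW => n /=.
  have h1 := BI n; have h2 := l1_ge0 (gL n); have h3 := l1_ge0 (gs n).
  have h0 := Apsd n (gL n - gs n).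
  have hl : 0 <= lL n by exact: ltW (lt_trans (ls0 n) (lslt n)).
  have h6 : 0 <= lL n * l1norm (gL n) by exact: mulr_ge0.
  have h4 : 2 * ls n * l1norm (gL n) <= lL n * l1norm (gL n).
    by apply: ler_wpM2r => //; rewrite h2l.
  have h5 : 2 * ls n * l1norm (gs n) <= lL n * l1norm (gs n).
    by apply: ler_wpM2r => //; rewrite h2l.
  rewrite h6 /=; lra.
- exact: cvg_cst.
- rewrite -(mulr0 3); apply: cvgM => //; exact: cvg_cst.
Qed.
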